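(* Let $G$ be a metabelian group, i.e. $[[x,y],z]=1$ for all $x,y,z\in G$, where $[a,b]=a^{-1}b^{-1}ab$. Then for every real Banach space $E$, Jensen's functional equation $f(xy)+f(xy^{-1})=2f(x)$ is stable for the pair $(G;E)$: for every function $f\colon G\to E$ for which there is $c>0$ with $\|f(xy)+f(xy^{-1})-2f(x)\|\le c$ for all $x,y\in G$, there exists a function $j\colon G\to E$ satisfying $j(xy)+j(xy^{-1})=2j(x)$ for all $x,y\in G$ such that $j-f$ is bounded on $G$.
   Context: Groups are written multiplicatively with identity $1$. *)

(* Defs.v *)
From HB Require Import structures.
From mathcomp Require Import all_boot all_order all_algebra.
From mathcomp Require Import all_classical all_reals all_analysis.
Set Implicit Arguments.
Unset Strict Implicit.
Unset Printing Implicit Defensive.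
Import Order.TTheory GRing.Theory Num.Theory.

(* Metabelian in the sense of the paper: [[x,y],z] = 1 for all x y z,
   with [a,b] = a^-1 b^-1 a b (this is MathComp's commg, notation [~ a, b]). *)
Definition metabelian (G : groupType) : Prop :=
  forall x y z : G, [~ [~ x, y], z]%g = 1%g.

(* Main.v *)
Require Import Defs.
From HB Require Import structures.
From mathcomp Require Import all_boot all_order all_algebra.
From mathcomp Require Import all_classical all_reals all_analysis.
From mathcomp Require Import lra.
Import Order.TTheory GRing.Theory Num.Theory.

Section Grp.
Variable G : groupType.
Hypothesis hG : metabelian G.
Local Open Scope group_scope.

Lemma central_comm (x y z : G) : [~ x, y] * z = z * [~ x, y].
Proof. by apply/commgP/eqP; apply: hG. Qed.

Lemma step0 (a w : G) :
  (a * w^-1) * (a * w^-1) * (a * a)^-1 * ((a * w) * (a * w)) = a * a.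
Proof.
have hc : w^-1 * a^-1 * w * a = [~ w, a] by rewrite /commg /conjg !mulgA.
have hc2 : a^-1 * w^-1 * a * w = [~ a, w] by rewrite /commg /conjg !mulgA.
have e1 : (a * w^-1) * (a * w^-1) * (a * a)^-1 * ((a * w) * (a * w))
   = a * w^-1 * a * (w^-1 * a^-1 * w * a) * w.
  by rewrite invgM !mulgA mulgVK.
rewrite e1 hc -(mulgA _ [~ w, a]) central_comm !mulgA.
have e2 : a * w^-1 * a * w = a * a * (a^-1 * w^-1 * a * w).
  by rewrite !mulgA mulgK.
by rewrite e2 hc2 -!mulgA !(mulVKg, mulKg).
Qed.

Lemma step (a u v : G) : v * a^-1 * u = a -> (v*v) * (a*a)^-1 * (u*u) = a*a.
Proof.
move=> h.
have hv : v = a * (a^-1 * u)^-1.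
  by rewrite invgM invgK mulgA -{1}h mulgK mulgVK.
have hu : u = a * (a^-1 * u) by rewrite mulVKg.
move: (a^-1 * u) hu hv => w -> ->.
exact: step0.
Qed.
Definition pw n (x : G) : G := iter n (fun u => u * u) x.

Lemma pw_key n (x y : G) :
  exists w, pw n (x * y) = pw n x * w /\ pw n (x * y^-1) = pw n x * w^-1.
Proof.
have h : pw n (x * y^-1) * (pw n x)^-1 * pw n (x * y) = pw n x.
  elim: n => [|n IH] /=; first by rewrite /pw /= !mulgA !mulgVK.
  exact: step.
exists ((pw n x)^-1 * pw n (x * y)); split; first by rewrite mulVKg.
by rewrite invgM invgK mulgA -{1}h mulgK mulgVK.
Qed.
End Grp.
Arguments pw {G}.


Local Open Scope classical_set_scope.
Local Open Scope ring_scope.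
Import numFieldNormedType.Exports.

Theorem theorem3p11 (G : groupType) (hG : metabelian G)
  (R : realType) (E : completeNormedModType R) (f : G -> E) :
  (exists c : R, 0 < c /\
     forall x y : G, `| f (x * y)%g + f (x * y^-1)%g - 2 *: f x | <= c) ->
  exists j : G -> E,
    (forall x y : G, j (x * y)%g + j (x * y^-1)%g = 2 *: j x) /\
    (exists M : R, forall x : G, `| j x - f x | <= M).
Proof.
move=> [c [c0 hc]].
have two : forall v : E, 2 *: v = v + v.
  by move=> v; rewrite scaler_nat mulr2n.

pose g x := f x - f 1%g.
have hg : forall x y, `|g (x * y)%g + g (x * y^-1)%g - 2 *: g x| <= c.
  move=> x y; rewrite /g.
  have -> : f (x * y)%g - f 1%g + (f (x * y^-1)%g - f 1%g) - 2 *: (f x - f 1%g)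
     = f (x * y)%g + f (x * y^-1)%g - 2 *: f x.
    move: (f (x * y)%g) (f (x * y^-1)%g) (f x) (f 1%g) => A B C D.
    rewrite scalerBr opprB (addrACA A) -[LHS]addrA; congr (_ + _).
    by rewrite (two D) addrA -opprD addNr add0r.
  exact: hc.
have hsq : forall u, `|g (u * u)%g - 2 *: g u| <= c.
  move=> u; have := hg u u; by rewrite mulgV /g subrr addr0.
pose q : R := 2^-1.
have q0 : 0 <= q by rewrite /q invr_ge0.
have q2 : q * 2 = 1 by rewrite /q mulVf // pnatr_eq0.
have qn0 : forall n, 0 <= q ^+ n by move=> n; rewrite exprn_ge0.
pose a x n := q ^+ n *: g (pw n x).
have ad : forall x n, `|a x n.+1 - a x n| <= c * q ^+ n.+1.
  move=> x n.
  have -> : a x n = q ^+ n.+1 *: (2 *: g (pw n x)).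
    by rewrite /a scalerA exprSr -mulrA q2 mulr1.
  rewrite /a /pw iterS -/(pw n x) -scalerBr normrZ ger0_norm // mulrC.
  by apply: ler_wpM2r => //; apply: hsq.
have bnd : forall x n, `|a x n - g x| <= c * (1 - q ^+ n).
  move=> x; elim=> [|n IH].
    by rewrite /a /pw /= expr0 scale1r subrr normr0 subrr mulr0.
  apply: le_trans (ler_distD (a x n) _ _) _.
  apply: le_trans (lerD (ad x n) IH) _.
  rewrite exprS; have := qn0 n; set t := q ^+ n => t0.
  rewrite /q; lra.
have acvg : forall x, cvgn (a x).
  move=> x; pose d k := a x k.+1 - a x k.
  have -> : a x = (fun n => g x + series d n).
    apply: funext => n; rewrite /series /= /d telescope_sumr //.
    by rewrite /a /pw /= (expr0 q) scale1r addrC subrK.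
  apply: is_cvgD; first exact: is_cvg_cst.
  apply: normed_cvg.
  apply: (@series_le_cvg _ _ (geometric (c * q) q)).
  - by move=> n; exact: normr_ge0.
  - by move=> n; apply: geometric_ge0 => //; apply: mulr_ge0 => //; apply: ltW.
  - by move=> n; rewrite /geometric /= -mulrA -exprS; exact: ad.
  - apply: is_cvg_geometric_series; rewrite ger0_norm // /q invf_lt1 //.
    by rewrite ltr1n.
pose J x := limn (a x).
have ha : forall x, a x @ \oo --> J x by move=> x; exact: acvg.
exists J; split; last first.
  exists (c + `|f 1%g|) => x.
  have Jb : `|J x - g x| <= c.
    have hn : (fun n => `|a x n - g x|) @ \oo --> `|J x - g x|.
      by apply: cvg_norm; apply: cvgB => //; exact: cvg_cst.
    apply: (cvgr_to_le hn).
    apply: nearW => n; apply: le_trans (bnd x n) _.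
    have := qn0 n; set t := q ^+ n => t0; nra.
  have -> : J x - f x = (J x - g x) - f 1%g by rewrite /g opprB addrA [RHS]addrAC addrK.
  by apply: le_trans (ler_normB _ _) _; apply: lerD.
move=> x y.
pose b n := a (x * y)%g n + a (x * y^-1)%g n - (a x n + a x n).
have hb1 : b @ \oo --> J (x * y)%g + J (x * y^-1)%g - (J x + J x).
  by apply: cvgB; apply: cvgD.
have hb0 : b @ \oo --> 0.
  apply: norm_cvg0.
  apply: (@squeeze_cvgr _ _ _ _ (fun=> 0) (geometric c q)).
  - apply: nearW => n; rewrite normr_ge0 /=.
    have [w [hu hv]] := @pw_key G hG n x y.
    rewrite /b /a hu hv -!scalerDr -scalerBr.
    rewrite normrZ ger0_norm // mulrC; apply: ler_wpM2r => //.
    by have := hg (pw n x) w; rewrite two.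
  - exact: cvg_cst.
  - apply: cvg_geometric; rewrite ger0_norm // /q invf_lt1 //.
    by rewrite ltr1n.
have := cvg_unique (@norm_hausdorff _ E) hb1 hb0.
by move=> h; rewrite two; apply: subr0_eq; apply: h.
Qed.
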